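(* In the Pathfinder game (started from the position consisting of the root constituent $\delta^{(0)} = \top$), neither player has a winning strategy, i.e. no strategy of either player guarantees a win against every strategy of the opponent.
   Context: $L$ is a first-order language without equality with finitely many predicate symbols and no function or constant symbols. For $d \in \mathbb{N}$, $\Delta^{(d)}$ is the finite set of Hintikka constituents of depth $d$ with no free variables ($\Delta^{(0)} = \{\top\}$, which is consistent); a constituent is consistent iff satisfiable, and every consistent constituent has a consistent depth-$(d+1)$ expansion. $\mathrm{expand}(1,\delta^{(d)})\subseteq\Delta^{(d+1)}$ denotes the expansions of $\delta^{(d)}$. Refinement tree: on $\Delta = \bigcup_d \Delta^{(d)}$ put an edge from each $\delta^{(d)}$ to each member of $\mathrm{expand}(1,\delta^{(d)})$, keeping a constituent lying in several depth-$d$ expansions as child of only one of them (such shared constituents are inconsistent). Pathfinder is a two-player alternating-turn game. Positions are finite sequences $\delta^{(0)}\delta^{(1)}\cdots\delta^{(d)}$ with each $\delta^{(k+1)}$ a child of $\delta^{(k)}$, possibly followed by a terminal symbol $*$. The player to move at a non-terminal position ending in $\delta^{(d)}$ either (select) appends a child $\delta^{(d+1)}$ of $\delta^{(d)}$ and passes the turn, or (challenge) appends $*$, ending the game; after a challenge on $\delta^{(d)}$, the challenging player wins if $\delta^{(d)}$ is inconsistent and the other player wins if $\delta^{(d)}$ is consistent. A play that never ends has no winner. *)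

(* Defs.v *)
From mathcomp Require Import all_boot.
Set Implicit Arguments.
Unset Strict Implicit.
Unset Printing Implicit Defensive.

(* The refinement tree of Hintikka constituents, captured through exactly the
   facts the context supplies about it:
   - Delta d : the finite set of closed constituents of depth d;
   - Delta 0 = {top}, and top is consistent;
   - child d x y : y (depth d+1) is a child of x (depth d) in the refinement
     tree, i.e. y is in expand(1,x) and was assigned to x; each node has at
     most one parent (it is a tree);
   - consistent d x : the constituent x is consistent (= satisfiable);
   - every consistent constituent has a consistent child (expansion). *)
Record RefinementTree := {
  Delta : nat -> finType;
  top : Delta 0;
  Delta0_top : forall x : Delta 0, x = top;
  child : forall d, Delta d -> Delta d.+1 -> Prop;
  child_unique_parent :
    forall d (x y : Delta d) (z : Delta d.+1), child x z -> child y z -> x = y;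
  consistent : forall d, Delta d -> Prop;
  top_consistent : consistent top;
  consistent_expand :
    forall d (x : Delta d), consistent x -> exists2 y, child x y & consistent y
}.

Section Game.
Variable T : RefinementTree.

(* Since the refinement tree is a tree, a non-terminal position
   delta^(0) ... delta^(d) is determined by its last entry delta^(d) : Delta d
   (depth = d).  A strategy assigns to each such position a move:
   [None] = challenge (append the terminal symbol), [Some y] = select the child y. *)
Definition strategy := forall d, Delta T d -> option (Delta T d.+1).

Definition legal (s : strategy) : Prop :=
  forall d (x : Delta T d) y, s d x = Some y -> child x y.

(* Players: [false] moves first (at the root, depth 0), [true] second;
   the player to move at depth d is [odd d]. *)
Definition mover (s0 s1 : strategy) : strategy :=
  fun d => if odd d then s1 d else s0 d.

Fixpoint run (s0 s1 : strategy) (d : nat) : option (Delta T d) :=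
  match d return option (Delta T d) with
  | 0 => Some (top T)
  | d'.+1 => match run s0 s1 d' with
             | Some x => mover s0 s1 x
             | None => None
             end
  end.

(* Player p wins the play of s0 (first player) against s1 (second player):
   at some reached position ending in x (depth d) the player to move
   (odd d) challenges; the challenger wins iff x is inconsistent, the other
   player wins iff x is consistent. Plays that never end have no winner. *)
Definition wins (s0 s1 : strategy) (p : bool) : Prop :=
  exists d (x : Delta T d),
    [/\ run s0 s1 d = Some x, mover s0 s1 x = None,
        (consistent x -> p = ~~ odd d) & (~ consistent x -> p = odd d)].

Definition winning_strategy (p : bool) (s : strategy) : Prop :=
  legal s /\
  forall t : strategy, legal t ->
    wins (if p then t else s) (if p then s else t) p.

End Game.

(* Main.v *)
Require Import Defs.
From mathcomp Require Import all_boot.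
From Stdlib Require Import ClassicalEpsilon.

Lemma tspec (T : RefinementTree) d (x : Delta T d) :
  {o : option (Delta T d.+1) |
     (consistent x -> exists y, [/\ o = Some y, child x y & consistent y]) /\
     (~ consistent x -> o = None)}.
Proof.
case: (excluded_middle_informative (consistent x)) => H.
  have [y [Hy1 Hy2]] : {y | child x y /\ consistent y}.
    apply: constructive_indefinite_description.
    by have [y ? ?] := consistent_expand H; exists y.
  by exists (Some y); split => // _; exists y.
by exists None; split.
Qed.

Definition tstrat (T : RefinementTree) : strategy T :=
  fun d x => proj1_sig (@tspec T d x).

Theorem mainTheorem11 (T : RefinementTree) (p : bool) :
  ~ exists s : strategy T, winning_strategy p s.
Proof.
move=> [s [_ Hw]].
set t := tstrat T.
have Ht : legal t.
  move=> d x y; rewrite /t /tstrat; case: (@tspec T _ x) => o [H1 H2] /= Ho.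
  case: (classic (consistent x)) => Hc.
    by have [y' [E ? ?]] := H1 Hc; move: Ho; rewrite E => -[<-].
  by move: Ho; rewrite (H2 Hc).
have [d [x [Hrun Hmov Hc Hnc]]] := Hw t Ht.
have Emov : forall d (x : Delta T d),
    mover (if p then t else s) (if p then s else t) x =
    if odd d == p then s d x else t d x.
  move=> e z; rewrite /mover; destruct p; by case: (odd e).
have Inv : forall d (x : Delta T d),
    run (if p then t else s) (if p then s else t) d = Some x ->
    odd d = p -> consistent x.
  elim=> [|e IH] z /=.
    by move=> [<-] _; apply: top_consistent.
  case E: (run _ _ e) => [w|] //.
  rewrite Emov => Hz Hodd.
  have Hne : (odd e == p) = false.
    by rewrite -Hodd; case: (odd e).
  move: Hz; rewrite Hne /t /tstrat; case: (@tspec T _ w) => o [H1 H2] /= Ho.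
  case: (classic (consistent w)) => Hcw.
    by have [y' [E' _ ?]] := H1 Hcw; move: Ho; rewrite E' => -[<-].
  by move: Ho; rewrite (H2 Hcw).
move: Hmov; rewrite Emov.
case: eqP => Hodd Hmov.
  have := Hc (Inv _ _ Hrun Hodd); rewrite -Hodd; by case: (odd d).
case: (classic (consistent x)) => Hcx.
  move: Hmov; rewrite /t /tstrat; case: (@tspec T _ x) => o [H1 H2] /= Ho.
  by have [y' [E' _ _]] := H1 Hcx; move: Ho; rewrite E'.
by apply: Hodd; rewrite (Hnc Hcx).
Qed.
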